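(* Let $\mathbf{k}$ be a commutative ring in which $2$ is invertible, and let $\mathcal{C}$ be a $\mathbf{k}$-linear supercategory whose underlying additive category is idempotent-complete. Then $(\mathcal{C}^{ct})^{ct}$ is equivalent to $\mathcal{C}$ as a supercategory.
   Context: An additive category is idempotent-complete if $\ker(p)$ exists for every object $X$ and $p\in\mathrm{End}(X)$ with $p^2=p$. A supercategory is a $\mathbf{k}$-linear additive category $\mathcal{C}$ with an endofunctor $\Pi$ and an isomorphism $\xi:\Pi^2\xrightarrow\sim\mathrm{id}$ with $\xi\circ\Pi=\Pi\circ\xi$. A superfunctor is a functor $F$ with an isomorphism $\alpha_F:F\Pi\xrightarrow\sim\Pi'F$ such that $(\xi'F)\circ(\Pi'\alpha_F)\circ(\alpha_F\Pi)=F\xi$; an equivalence of supercategories is a superfunctor whose functor is an equivalence. The Clifford twist $\mathcal{C}^{ct}$ has objects $(X,\varphi)$ with $\varphi:\Pi X\xrightarrow\sim X$, $\varphi\circ\Pi\varphi=\xi_X$, morphisms $f:X\to X'$ with $f\varphi=\varphi'\Pi f$, $\Pi^{ct}(X,\varphi)=(X,-\varphi)$, and $\xi^{ct}=\mathrm{id}$. *)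

(* Defs.v *)
From HB Require Import structures.
From mathcomp Require Import all_boot all_algebra.

Set Implicit Arguments.
Unset Strict Implicit.
Unset Printing Implicit Defensive.

Import GRing.Theory.
Local Open Scope ring_scope.

Record LinCat (k : pzRingType) := {
  ob :> Type;
  hom : ob -> ob -> lmodType k;
  comp : forall X Y Z : ob, hom Y Z -> hom X Y -> hom X Z;
  idm : forall X : ob, hom X X;
  compA : forall X Y Z W (h : hom Z W) (g : hom Y Z) (f : hom X Y),
      comp h (comp g f) = comp (comp h g) f;
  comp1m : forall X Y (f : hom X Y), comp (idm Y) f = f;
  compm1 : forall X Y (f : hom X Y), comp f (idm X) = f;
  comp_linr : forall X Y Z (g : hom Y Z) (a : k) (f f' : hom X Y),
      comp g (a *: f + f') = a *: comp g f + comp g f';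
  comp_linl : forall X Y Z (f : hom X Y) (a : k) (g g' : hom Y Z),
      comp (a *: g + g') f = a *: comp g f + comp g' f
}.
Arguments hom {k} C X Y : rename.
Arguments comp {k} C {X Y Z} g f : rename.
Arguments idm {k} C X : rename.

Definition is_iso k (C : LinCat k) (X Y : C) (f : hom C X Y) : Prop :=
  exists g : hom C Y X, comp C g f = idm C X /\ comp C f g = idm C Y.

Definition is_zero_object k (C : LinCat k) (Z : C) : Prop :=
  forall X : C, (forall f : hom C Z X, f = 0) /\ (forall f : hom C X Z, f = 0).

Definition is_biproduct k (C : LinCat k) (X Y S : C)
    (i1 : hom C X S) (i2 : hom C Y S) (p1 : hom C S X) (p2 : hom C S Y) : Prop :=
  [/\ comp C p1 i1 = idm C X, comp C p2 i2 = idm C Y,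
      comp C p1 i2 = 0, comp C p2 i1 = 0 &
      comp C i1 p1 + comp C i2 p2 = idm C S].

Definition additive_cat k (C : LinCat k) : Prop :=
  (exists Z : C, is_zero_object Z) /\
  (forall X Y : C, exists (S : C) (i1 : hom C X S) (i2 : hom C Y S)
      (p1 : hom C S X) (p2 : hom C S Y), is_biproduct i1 i2 p1 p2).

Definition is_kernel k (C : LinCat k) (X Y K : C) (p : hom C X Y) (i : hom C K X) :
    Prop :=
  comp C p i = 0 /\
  forall (Z : C) (f : hom C Z X), comp C p f = 0 ->
    exists g : hom C Z K, comp C i g = f /\
      forall g' : hom C Z K, comp C i g' = f -> g' = g.

Definition idempotent_complete k (C : LinCat k) : Prop :=
  forall (X : C) (p : hom C X X), comp C p p = p ->
    exists (K : C) (i : hom C K X), is_kernel p i.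

Record LinFunctor k (C D : LinCat k) := {
  fob :> C -> D;
  fhom : forall X Y : C, hom C X Y -> hom D (fob X) (fob Y);
  fcomp : forall X Y Z (g : hom C Y Z) (f : hom C X Y),
      fhom (comp C g f) = comp D (fhom g) (fhom f);
  fid : forall X, fhom (idm C X) = idm D (fob X);
  flin : forall X Y (a : k) (f g : hom C X Y), fhom (a *: f + g) = a *: fhom f + fhom g
}.
Arguments fhom {k C D} F {X Y} f : rename.

Definition is_natural k (C D : LinCat k) (F G : C -> D)
    (Fh : forall X Y : C, hom C X Y -> hom D (F X) (F Y))
    (Gh : forall X Y : C, hom C X Y -> hom D (G X) (G Y))
    (eta : forall X : C, hom D (F X) (G X)) : Prop :=
  forall (X Y : C) (f : hom C X Y), comp D (Gh X Y f) (eta X) = comp D (eta Y) (Fh X Y f).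

Definition is_natural_iso k (C D : LinCat k) (F G : C -> D)
    (Fh : forall X Y : C, hom C X Y -> hom D (F X) (F Y))
    (Gh : forall X Y : C, hom C X Y -> hom D (G X) (G Y))
    (eta : forall X : C, hom D (F X) (G X)) : Prop :=
  is_natural Fh Gh eta /\ forall X, is_iso (eta X).

Definition is_equivalence k (C D : LinCat k) (F : LinFunctor C D) : Prop :=
  exists (G : D -> C) (Gh : forall X Y : D, hom D X Y -> hom C (G X) (G Y)),
    (forall X Y Z (g : hom D Y Z) (f : hom D X Y),
        Gh X Z (comp D g f) = comp C (Gh Y Z g) (Gh X Y f)) /\
    (forall X, Gh X X (idm D X) = idm C (G X)) /\
    (exists eta : forall X : C, hom C (G (F X)) X,
        is_natural_iso (fun X Y f => Gh (F X) (F Y) (fhom F f))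
                       (fun X Y f => f) eta) /\
    (exists eps : forall Y : D, hom D (F (G Y)) Y,
        is_natural_iso (fun X Y f => fhom F (Gh X Y f)) (fun X Y f => f) eps).

Record SuperCat k := {
  scat :> LinCat k;
  Pi : LinFunctor scat scat;
  xi : forall X : scat, hom scat (Pi (Pi X)) X;
  xi_nat : forall (X Y : scat) (f : hom scat X Y),
      comp scat f (xi X) = comp scat (xi Y) (fhom Pi (fhom Pi f));
  xi_iso : forall X : scat, is_iso (xi X);
  xi_Pi : forall X : scat, xi (Pi X) = fhom Pi (xi X)
}.
Arguments Pi {k} s : rename.
Arguments xi {k} s X : rename.

Record SuperFunctor k (C D : SuperCat k) := {
  sfun :> LinFunctor C D;
  alpha : forall X : C, hom D (sfun (Pi C X)) (Pi D (sfun X));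
  alpha_nat : forall (X Y : C) (f : hom C X Y),
      comp D (fhom (Pi D) (fhom sfun f)) (alpha X)
      = comp D (alpha Y) (fhom sfun (fhom (Pi C) f));
  alpha_iso : forall X : C, is_iso (alpha X);
  alpha_coh : forall X : C,
      comp D (xi D (sfun X)) (comp D (fhom (Pi D) (alpha X)) (alpha (Pi C X)))
      = fhom sfun (xi C X)
}.

Definition is_super_equivalence k (C D : SuperCat k) (F : SuperFunctor C D) : Prop :=
  is_equivalence F.

Lemma comp_0r k (C : LinCat k) (X Y Z : C) (g : hom C Y Z) :
  comp C g (0 : hom C X Y) = 0.
Proof.
have H := comp_linr (X:=X) g 1 0 0; rewrite !scale1r addr0 in H.
by apply: (@addrI _ (comp C g 0)); rewrite addr0 -H.
Qed.

Lemma comp_0l k (C : LinCat k) (X Y Z : C) (f : hom C X Y) :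
  comp C (0 : hom C Y Z) f = 0.
Proof.
have H := comp_linl (Z:=Z) f 1 0 0; rewrite !scale1r addr0 in H.
by apply: (@addrI _ (comp C 0 f)); rewrite addr0 -H.
Qed.

Lemma comp_Nr k (C : LinCat k) (X Y Z : C) (g : hom C Y Z) (f : hom C X Y) :
  comp C g (- f) = - comp C g f.
Proof.
have H := comp_linr g 1 f (- f); rewrite !scale1r subrr comp_0r in H.
by apply/eqP; rewrite -addr_eq0 addrC -H.
Qed.

Lemma comp_Nl k (C : LinCat k) (X Y Z : C) (g : hom C Y Z) (f : hom C X Y) :
  comp C (- g) f = - comp C g f.
Proof.
have H := comp_linl f 1 g (- g); rewrite !scale1r subrr comp_0l in H.
by apply/eqP; rewrite -addr_eq0 addrC -H.
Qed.

Lemma fhom0 k (C D : LinCat k) (F : LinFunctor C D) (X Y : C) :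
  fhom F (0 : hom C X Y) = 0.
Proof.
have H := flin F 1 (0 : hom C X Y) 0; rewrite !scale1r addr0 in H.
by apply: (@addrI _ (fhom F (0 : hom C X Y))); rewrite addr0 -H.
Qed.

Lemma fhomN k (C D : LinCat k) (F : LinFunctor C D) (X Y : C) (f : hom C X Y) :
  fhom F (- f) = - fhom F f.
Proof.
have H := flin F 1 f (- f); rewrite !scale1r subrr fhom0 in H.
by apply/eqP; rewrite -addr_eq0 addrC -H.
Qed.

Record ctOb k (C : SuperCat k) := CtOb {
  ctX : C;
  ctphi : hom C (Pi C ctX) ctX;
  ctphi_iso : is_iso ctphi;
  ctphi_sq : comp C ctphi (fhom (Pi C) ctphi) = xi C ctX
}.
Arguments ctX {k C} c : rename.
Arguments ctphi {k C} c : rename.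

Definition ct_pred k (C : SuperCat k) (a b : ctOb C) :
    pred (hom C (ctX a) (ctX b)) :=
  fun f => comp C f (ctphi a) == comp C (ctphi b) (fhom (Pi C) f).

Arguments ct_pred {k C} a b f.

Lemma ct_pred_closed k (C : SuperCat k) (a b : ctOb C) :
  GRing.subsemimod_closed (ct_pred a b).
Proof.
split; [split|].
- by rewrite unfold_in /ct_pred /= comp_0l fhom0 comp_0r.
- move=> f g; rewrite !unfold_in /ct_pred => /eqP Hf /eqP Hg; apply/eqP.
  have E1 := comp_linl (ctphi a) 1 f g; rewrite !scale1r in E1.
  have E2 := flin (Pi C) 1 f g; rewrite !scale1r in E2.
  have E3 := comp_linr (ctphi b) 1 (fhom (Pi C) f) (fhom (Pi C) g).
  rewrite !scale1r in E3.
  by rewrite E1 E2 E3 Hf Hg.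
- move=> c f; rewrite !unfold_in /ct_pred => /eqP Hf; apply/eqP.
  have E1 := comp_linl (ctphi a) c f 0; rewrite addr0 comp_0l addr0 in E1.
  have E2 := flin (Pi C) c f 0; rewrite addr0 fhom0 addr0 in E2.
  have E3 := comp_linr (ctphi b) c (fhom (Pi C) f) 0.
  rewrite addr0 comp_0r addr0 in E3.
  by rewrite E1 E2 E3 Hf.
Qed.

HB.instance Definition _ k (C : SuperCat k) (a b : ctOb C) :=
  GRing.isSubmodClosed.Build k (hom C (ctX a) (ctX b)) (ct_pred a b)
    (ct_pred_closed a b).

Definition ctHom k (C : SuperCat k) (a b : ctOb C) :=
  {f : hom C (ctX a) (ctX b) | ct_pred a b f}.

HB.instance Definition _ k (C : SuperCat k) (a b : ctOb C) :=
  [isSub for (@sval _ _ : ctHom a b -> _)].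
HB.instance Definition _ k (C : SuperCat k) (a b : ctOb C) :=
  [Choice of ctHom a b by <:].
HB.instance Definition _ k (C : SuperCat k) (a b : ctOb C) :=
  [SubChoice_isSubLmodule of ctHom a b by <:].


Lemma ctP k (C : SuperCat k) (a b : ctOb C) (f : ctHom a b) :
  comp C (val f) (ctphi a) = comp C (ctphi b) (fhom (Pi C) (val f)).
Proof. by case: f => f /= /eqP. Qed.

Lemma ct_in k (C : SuperCat k) (a b : ctOb C) (f : hom C (ctX a) (ctX b)) :
  comp C f (ctphi a) = comp C (ctphi b) (fhom (Pi C) f) -> ct_pred a b f.
Proof. by move=> H; apply/eqP. Qed.

Lemma ctcomp_subproof k (C : SuperCat k) (a b c : ctOb C)
    (g : ctHom b c) (f : ctHom a b) : ct_pred a c (comp C (val g) (val f)).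
Proof.
apply: ct_in; rewrite -compA ctP compA ctP -compA.
by rewrite -(fcomp (Pi C)).
Qed.

Definition ctcomp k (C : SuperCat k) (a b c : ctOb C)
    (g : ctHom b c) (f : ctHom a b) : ctHom a c :=
  exist _ (comp C (val g) (val f)) (ctcomp_subproof g f).

Lemma ctid_subproof k (C : SuperCat k) (a : ctOb C) : ct_pred a a (idm C (ctX a)).
Proof. by apply: ct_in; rewrite fid comp1m compm1. Qed.

Definition ctid k (C : SuperCat k) (a : ctOb C) : ctHom a a :=
  exist _ (idm C (ctX a)) (ctid_subproof a).

Lemma val_lin k (C : SuperCat k) (a b : ctOb C) (c : k) (f g : ctHom a b) :
  val (c *: f + g) = c *: val f + val g.
Proof. by rewrite raddfD /=. Qed.

Definition ctLinCat k (C : SuperCat k) : LinCat k.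
Proof.
refine {| ob := ctOb C; hom := fun a b => (ctHom a b : lmodType k);
          comp := @ctcomp k C; idm := @ctid k C |}.
- by move=> *; apply: val_inj; rewrite /= compA.
- by move=> *; apply: val_inj; rewrite /= comp1m.
- by move=> *; apply: val_inj; rewrite /= compm1.
- by move=> X Y Z g c f f'; apply: val_inj; rewrite /= comp_linr.
- by move=> X Y Z f c g g'; apply: val_inj; rewrite /= comp_linl.
Defined.

Lemma ctPi_iso k (C : SuperCat k) (a : ctOb C) : is_iso (- ctphi a).
Proof.
case: (ctphi_iso a) => g [H1 H2]; exists (- g).
by rewrite !(comp_Nl, comp_Nr) !opprK H1 H2.
Qed.

Lemma ctPi_sq k (C : SuperCat k) (a : ctOb C) :
  comp C (- ctphi a) (fhom (Pi C) (- ctphi a)) = xi C (ctX a).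
Proof. by rewrite fhomN comp_Nl comp_Nr opprK ctphi_sq. Qed.

Definition ctPiOb k (C : SuperCat k) (a : ctOb C) : ctOb C :=
  CtOb (ctPi_iso a) (ctPi_sq a).

Lemma ctPihom_subproof k (C : SuperCat k) (a b : ctOb C) (f : ctHom a b) :
  ct_pred (ctPiOb a) (ctPiOb b) (val f).
Proof. by apply: ct_in; rewrite /= comp_Nr comp_Nl ctP. Qed.

Definition ctPihom k (C : SuperCat k) (a b : ctOb C) (f : ctHom a b) :
    ctHom (ctPiOb a) (ctPiOb b) :=
  exist _ (val f) (ctPihom_subproof f).

Definition ctPi k (C : SuperCat k) : LinFunctor (ctLinCat C) (ctLinCat C).
Proof.
refine {| fob := (@ctPiOb k C : ctLinCat C -> ctLinCat C);
          fhom := fun a b f => @ctPihom k C a b f |}.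
- by move=> *; apply: val_inj.
- by move=> *; apply: val_inj.
- by move=> *; apply: val_inj.
Defined.

Lemma ctxi_subproof k (C : SuperCat k) (a : ctOb C) :
  ct_pred (ctPiOb (ctPiOb a)) a (idm C (ctX a)).
Proof. by apply: ct_in; rewrite /= opprK comp1m fid compm1. Qed.

Definition ctxi k (C : SuperCat k) (a : ctOb C) :
    ctHom (ctPiOb (ctPiOb a)) a :=
  exist _ (idm C (ctX a)) (ctxi_subproof a).

Lemma ctxiV_subproof k (C : SuperCat k) (a : ctOb C) :
  ct_pred a (ctPiOb (ctPiOb a)) (idm C (ctX a)).
Proof. by apply: ct_in; rewrite /= opprK comp1m fid compm1. Qed.

Definition ctSuperCat k (C : SuperCat k) : SuperCat k.
Proof.
refine {| scat := ctLinCat C; Pi := ctPi C;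
          xi := (@ctxi k C : forall a : ctLinCat C,
                   hom (ctLinCat C) (ctPi C (ctPi C a)) a) |}.
- by move=> a b f; apply: val_inj; rewrite /= comp1m compm1.
- move=> a; exists (exist _ (idm C (ctX a)) (ctxiV_subproof a)).
  by split; apply: val_inj; rewrite /= comp1m.
- by move=> a; apply: val_inj.
Defined.

(* Main.v *)
From HB Require Import structures.
From mathcomp Require Import all_boot all_algebra.
From Stdlib Require Import ClassicalEpsilon.
Require Import Defs.
Set Implicit Arguments.
Unset Strict Implicit.
Unset Printing Implicit Defensive.
Import GRing.Theory.
Local Open Scope ring_scope.



Lemma compDr k (C : LinCat k) (X Y Z : C) (g : hom C Y Z) (f f' : hom C X Y) :
  comp C g (f + f') = comp C g f + comp C g f'.
Proof. by have := comp_linr g 1 f f'; rewrite !scale1r. Qed.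
Lemma compDl k (C : LinCat k) (X Y Z : C) (g g' : hom C Y Z) (f : hom C X Y) :
  comp C (g + g') f = comp C g f + comp C g' f.
Proof. by have := comp_linl f 1 g g'; rewrite !scale1r. Qed.
Lemma compZr k (C : LinCat k) (X Y Z : C) (g : hom C Y Z) a (f : hom C X Y) :
  comp C g (a *: f) = a *: comp C g f.
Proof. by have := comp_linr g a f 0; rewrite !addr0 comp_0r addr0. Qed.
Lemma compZl k (C : LinCat k) (X Y Z : C) (g : hom C Y Z) a (f : hom C X Y) :
  comp C (a *: g) f = a *: comp C g f.
Proof. by have := comp_linl f a g 0; rewrite !addr0 comp_0l addr0. Qed.
Lemma compBr k (C : LinCat k) (X Y Z : C) (g : hom C Y Z) (f f' : hom C X Y) :
  comp C g (f - f') = comp C g f - comp C g f'.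
Proof. by rewrite compDr comp_Nr. Qed.
Lemma compBl k (C : LinCat k) (X Y Z : C) (g g' : hom C Y Z) (f : hom C X Y) :
  comp C (g - g') f = comp C g f - comp C g' f.
Proof. by rewrite compDl comp_Nl. Qed.
Lemma fhomD k (C D : LinCat k) (F : LinFunctor C D) (X Y : C) (f g : hom C X Y) :
  fhom F (f + g) = fhom F f + fhom F g.
Proof. by have := flin F 1 f g; rewrite !scale1r. Qed.
Lemma fhomZ k (C D : LinCat k) (F : LinFunctor C D) (X Y : C) a (f : hom C X Y) :
  fhom F (a *: f) = a *: fhom F f.
Proof. by have := flin F a f 0; rewrite !addr0 fhom0 addr0. Qed.
Lemma fhomB k (C D : LinCat k) (F : LinFunctor C D) (X Y : C) (f g : hom C X Y) :
  fhom F (f - g) = fhom F f - fhom F g.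
Proof. by rewrite fhomD fhomN. Qed.

Lemma sq_iso k (C : SuperCat k) (X : C) (phi : hom C (Pi C X) X) :
  comp C phi (fhom (Pi C) phi) = xi C X -> is_iso phi.
Proof.
move=> H; case: (xi_iso X) => xv [H1 H2].
case: (xi_iso (Pi C X)) => yv [H3 H4].
exists (comp C (fhom (Pi C) phi) xv); split.
-
  have N : comp C xv phi = comp C (fhom (Pi C) (fhom (Pi C) phi)) yv.
    have E := xi_nat phi.
    rewrite -[LHS]compm1 -H4 compA -[comp C (comp C xv phi) _]compA E.
    by rewrite compA H1 comp1m.
  by rewrite -compA N compA -fcomp H -xi_Pi H4.
- by rewrite compA H H2.
Qed.

Lemma inv_ct k (C : SuperCat k) (a b : ctOb C) (f : hom C (ctX a) (ctX b))
   (g : hom C (ctX b) (ctX a)) :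
  ct_pred a b f -> comp C g f = idm C _ -> comp C f g = idm C _ -> ct_pred b a g.
Proof.
move=> /eqP Hf H1 H2; apply/eqP.
rewrite -[LHS]compm1 -fid -H2 fcomp compA -(compA g (ctphi b)) -Hf.
by rewrite compA H1 comp1m.
Qed.



Record Split k (C : LinCat k) (X : C) (e : hom C X X) := {
  sK : C; si : hom C sK X; sr : hom C X sK;
  sri : comp C sr si = idm C sK; sir : comp C si sr = e }.

Lemma split_ex k (C : LinCat k) (Cidem : idempotent_complete C) (X : C) (e : hom C X X) :
  comp C e e = e -> exists s : Split e, True.
Proof.
move=> He.
have Hp : comp C (idm C X - e) (idm C X - e) = idm C X - e.
  by rewrite compBl !compBr comp1m compm1 He comp1m subrr subr0.
case: (Cidem X _ Hp) => K [i [Hi Hu]].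
have pe : comp C (idm C X - e) e = 0 by rewrite compBl comp1m He subrr.
case: (Hu X e pe) => r [Hr _].
have ei : comp C e i = i.
  by move: Hi; rewrite compBl comp1m => /eqP; rewrite subr_eq0 => /eqP.
case: (Hu K i Hi) => g [_ Hg].
have E1 := Hg (idm C K) (compm1 i).
have E2 := Hg (comp C r i) ltac:(by rewrite compA Hr).
by exists (@Build_Split k C X e K i r (etrans E2 (esym E1)) Hr).
Qed.



Definition oX k (C : SuperCat k) (O : ctOb (ctSuperCat C)) : C := ctX (ctX O).
Definition ophi k (C : SuperCat k) (O : ctOb (ctSuperCat C)) :
  hom C (Pi C (oX O)) (oX O) := ctphi (ctX O).
Definition opsi k (C : SuperCat k) (O : ctOb (ctSuperCat C)) :
  hom C (oX O) (oX O) := val (ctphi O).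
Definition mv k (C : SuperCat k) (O O' : ctOb (ctSuperCat C))
  (f : hom (ctSuperCat (ctSuperCat C)) O O') : hom C (oX O) (oX O') := val (val f).

Lemma psi_phi k (C : SuperCat k) (O : ctOb (ctSuperCat C)) :
  comp C (opsi O) (ophi O) = - comp C (ophi O) (fhom (Pi C) (opsi O)).
Proof.
have := ctP (ctphi O); rewrite /opsi /ophi /= => <-.
by rewrite comp_Nr opprK.
Qed.

Lemma psi_sq k (C : SuperCat k) (O : ctOb (ctSuperCat C)) :
  comp C (opsi O) (opsi O) = idm C (oX O).
Proof. exact: (congr1 val (ctphi_sq O)). Qed.

Lemma phi_sq k (C : SuperCat k) (O : ctOb (ctSuperCat C)) :
  comp C (ophi O) (fhom (Pi C) (ophi O)) = xi C (oX O).
Proof. exact: ctphi_sq. Qed.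

Lemma mv_phi k (C : SuperCat k) (O O' : ctOb (ctSuperCat C))
  (f : hom (ctSuperCat (ctSuperCat C)) O O') :
  comp C (mv f) (ophi O) = comp C (ophi O') (fhom (Pi C) (mv f)).
Proof. exact: ctP. Qed.

Lemma mv_psi k (C : SuperCat k) (O O' : ctOb (ctSuperCat C))
  (f : hom (ctSuperCat (ctSuperCat C)) O O') :
  comp C (mv f) (opsi O) = comp C (opsi O') (mv f).
Proof. exact: (congr1 val (ctP f)). Qed.

Lemma mv_lin k (C : SuperCat k) (O O' : ctOb (ctSuperCat C)) a
  (f g : hom (ctSuperCat (ctSuperCat C)) O O') :
  mv (a *: f + g) = a *: mv f + mv g.
Proof. by rewrite /mv !val_lin. Qed.

Lemma psi_Pi k (C : SuperCat k) (O : ctOb (ctSuperCat C)) :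
  opsi (ctPiOb O) = - opsi O.
Proof. by []. Qed.

Lemma half2 (k : pzRingType) (u : k) (hu : 2 * u = 1) (V : lmodType k) (f : V) :
  u *: f + u *: f = f.
Proof. by rewrite -scalerDl -mulr2n -mulr_natl hu scale1r. Qed.

Definition oe k (C : SuperCat k) (u : k) (O : ctOb (ctSuperCat C)) : hom C (oX O) (oX O) :=
  u *: (idm C (oX O) + opsi O).

Lemma psi_e k (C : SuperCat k) u (O : ctOb (ctSuperCat C)) :
  comp C (opsi O) (oe u O) = oe u O.
Proof. by rewrite /oe compZr compDr compm1 psi_sq addrC. Qed.

Lemma e_idem k (C : SuperCat k) u (hu : 2 * u = 1) (O : ctOb (ctSuperCat C)) :
  comp C (oe u O) (oe u O) = oe u O.
Proof.
by rewrite {1}/oe compZl compDl comp1m psi_e half2.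
Qed.

Lemma e_Pi k (C : SuperCat k) u (hu : 2 * u = 1) (O : ctOb (ctSuperCat C)) :
  oe u (ctPiOb O) = idm C _ - oe u O.
Proof.
apply/eqP; rewrite eq_sym subr_eq; apply/eqP.
rewrite /oe psi_Pi -scalerDr addrACA addNr addr0.
by rewrite scalerDr half2.
Qed.

Lemma e_PiPi k (C : SuperCat k) u (O : ctOb (ctSuperCat C)) :
  oe u (ctPiOb (ctPiOb O)) = oe u O.
Proof. by rewrite /oe !psi_Pi opprK. Qed.

Lemma phi_e k (C : SuperCat k) u (hu : 2 * u = 1) (O : ctOb (ctSuperCat C)) :
  comp C (ophi O) (fhom (Pi C) (oe u O)) + comp C (oe u O) (ophi O) = ophi O.
Proof.
rewrite /oe fhomZ fhomD fid compZr compZl compDr compDl compm1 comp1m psi_phi.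
by rewrite -scalerDr addrACA subrr addr0 scalerDr half2.
Qed.

Lemma phi_Pie k (C : SuperCat k) u (hu : 2 * u = 1) (O : ctOb (ctSuperCat C)) :
  comp C (ophi O) (fhom (Pi C) (oe u O)) = comp C (idm C _ - oe u O) (ophi O).
Proof. by rewrite compBl comp1m -{2}(phi_e hu O) addrK. Qed.

Lemma phi_Pip k (C : SuperCat k) u (hu : 2 * u = 1) (O : ctOb (ctSuperCat C)) :
  comp C (ophi O) (fhom (Pi C) (idm C _ - oe u O)) = comp C (oe u O) (ophi O).
Proof. by rewrite fhomB fid compBr compm1 (phi_Pie hu) compBl comp1m opprB addrC subrK. Qed.



Lemma s_ei k (C : LinCat k) (X : C) (e : hom C X X) (s : Split e) :
  comp C e (si s) = si s.
Proof. by have := congr1 (fun h => comp C h (si s)) (sir s); rewrite /= -compA sri compm1 => <-. Qed.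
Lemma s_re k (C : LinCat k) (X : C) (e : hom C X X) (s : Split e) :
  comp C (sr s) e = sr s.
Proof. by have := congr1 (fun h => comp C (sr s) h) (sir s); rewrite /= compA sri comp1m => <-. Qed.

Lemma AL k (C : LinCat k) (X Y Z : C) (a : hom C Y Z) (b : hom C X Y) (c : hom C X Z) :
  comp C a b = c -> forall W (h : hom C Z W), comp C (comp C h a) b = comp C h c.
Proof. by move=> E W h; rewrite -compA E. Qed.

Definition osplit k (C : SuperCat k) (u : k) (hu : 2 * u = 1) (Cidem : idempotent_complete C)
  (O : ctOb (ctSuperCat C)) : Split (oe u O) :=
  proj1_sig (constructive_indefinite_description _ (split_ex Cidem (e_idem hu O))).

Definition pinv k (C : SuperCat k) (O : ctOb (ctSuperCat C)) : hom C (oX O) (Pi C (oX O)) :=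
  proj1_sig (constructive_indefinite_description _ (ctphi_iso (ctX O))).
Lemma pinvP k (C : SuperCat k) (O : ctOb (ctSuperCat C)) :
  comp C (pinv O) (ophi O) = idm C _ /\ comp C (ophi O) (pinv O) = idm C _.
Proof. exact: (proj2_sig (constructive_indefinite_description _ (ctphi_iso (ctX O)))). Qed.

Lemma mv_e k (C : SuperCat k) u (O O' : ctOb (ctSuperCat C))
  (f : hom (ctSuperCat (ctSuperCat C)) O O') :
  comp C (mv f) (oe u O) = comp C (oe u O') (mv f).
Proof. by rewrite /oe compZr compZl compDr compDl compm1 comp1m mv_psi. Qed.

Definition Fob k (C : SuperCat k) (u : k) (hu : 2 * u = 1) (Cidem : idempotent_complete C)
  (O : ctOb (ctSuperCat C)) : C := sK (osplit hu Cidem O).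
Definition Fh k (C : SuperCat k) (u : k) (hu : 2 * u = 1) (Cidem : idempotent_complete C)
  (O O' : ctOb (ctSuperCat C)) (f : hom (ctSuperCat (ctSuperCat C)) O O') :
  hom C (Fob hu Cidem O) (Fob hu Cidem O') :=
  comp C (sr (osplit hu Cidem O')) (comp C (mv f) (si (osplit hu Cidem O))).

Definition FF k (C : SuperCat k) (u : k) (hu : 2 * u = 1) (Cidem : idempotent_complete C) :
  LinFunctor (ctSuperCat (ctSuperCat C)) C.
Proof.
refine {| fob := (Fob hu Cidem : ctSuperCat (ctSuperCat C) -> C);
          fhom := @Fh k C u hu Cidem |}.
- move=> X Y Z g f; rewrite /Fh /= -/(mv f) !compA (AL (sir _)).
  by rewrite (AL (esym (mv_e u f))) !compA (AL (s_ei _)).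
- move=> X; rewrite /Fh /=.
  by rewrite comp1m sri.
- move=> X Y a f g; rewrite /Fh mv_lin compDl compZl compDr compZr.
  by [].
Defined.



Lemma F_ir k (C D : LinCat k) (F : LinFunctor C D) (X : C) (e : hom C X X) (s : Split e) :
  comp D (fhom F (si s)) (fhom F (sr s)) = fhom F e.
Proof. by rewrite -fcomp sir. Qed.

Lemma conj_inv k (C : LinCat k) (X Y : C) (phi : hom C X Y) (pi : hom C Y X)
  (a : hom C X X) (b : hom C Y Y) :
  comp C pi phi = idm C X -> comp C phi pi = idm C Y ->
  comp C phi a = comp C b phi -> comp C a pi = comp C pi b.
Proof.
move=> H1 H2 E.
by rewrite -[LHS]comp1m -H1 -compA (compA phi) E -compA H2 compm1.
Qed.

Lemma Pie_pinv k (C : SuperCat k) (u : k) (hu : 2 * u = 1) (O : ctOb (ctSuperCat C)) :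
  comp C (fhom (Pi C) (oe u O)) (pinv O) = comp C (pinv O) (idm C _ - oe u O).
Proof. by case: (pinvP O) => H1 H2; apply: conj_inv H1 H2 (phi_Pie hu O). Qed.
Lemma Pip_pinv k (C : SuperCat k) (u : k) (hu : 2 * u = 1) (O : ctOb (ctSuperCat C)) :
  comp C (fhom (Pi C) (idm C _ - oe u O)) (pinv O) = comp C (pinv O) (oe u O).
Proof. by case: (pinvP O) => H1 H2; apply: conj_inv H1 H2 (phi_Pip hu O). Qed.
Lemma mv_pinv k (C : SuperCat k) (O O' : ctOb (ctSuperCat C))
  (f : hom (ctSuperCat (ctSuperCat C)) O O') :
  comp C (fhom (Pi C) (mv f)) (pinv O) = comp C (pinv O') (mv f).
Proof.
case: (pinvP O) => H1 H2; case: (pinvP O') => H3 H4.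
rewrite -[LHS]comp1m -H3 -compA (compA (ophi O')) -mv_phi -compA H2 compm1.
by [].
Qed.

Lemma mv_p k (C : SuperCat k) (u : k) (O O' : ctOb (ctSuperCat C))
  (f : hom (ctSuperCat (ctSuperCat C)) O O') :
  comp C (idm C _ - oe u O') (mv f) = comp C (mv f) (idm C _ - oe u O).
Proof. by rewrite compBl compBr comp1m compm1 mv_e. Qed.

Definition oalpha k (C : SuperCat k) (u : k) (hu : 2 * u = 1) (Cidem : idempotent_complete C)
  (O : ctOb (ctSuperCat C)) :
  hom C (Fob hu Cidem (ctPiOb O)) (Pi C (Fob hu Cidem O)) :=
  comp C (fhom (Pi C) (sr (osplit hu Cidem O)))
    (comp C (pinv O) (si (osplit hu Cidem (ctPiOb O)))).

Lemma ePi_i k (C : SuperCat k) (u : k) (hu : 2 * u = 1) (Cidem : idempotent_complete C)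
  (O : ctOb (ctSuperCat C)) :
  comp C (idm C _ - oe u O) (si (osplit hu Cidem (ctPiOb O))) = si (osplit hu Cidem (ctPiOb O)).
Proof. by rewrite -(e_Pi hu) s_ei. Qed.
Lemma ePi_ir k (C : SuperCat k) (u : k) (hu : 2 * u = 1) (Cidem : idempotent_complete C)
  (O : ctOb (ctSuperCat C)) :
  comp C (si (osplit hu Cidem (ctPiOb O))) (sr (osplit hu Cidem (ctPiOb O))) = idm C _ - oe u O.
Proof. by rewrite sir (e_Pi hu). Qed.

Lemma alpha_nat' k (C : SuperCat k) (u : k) (hu : 2 * u = 1) (Cidem : idempotent_complete C)
  (O O' : ctOb (ctSuperCat C)) (f : hom (ctSuperCat (ctSuperCat C)) O O') :
  comp C (fhom (Pi C) (fhom (FF hu Cidem) f)) (oalpha hu Cidem O)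
  = comp C (oalpha hu Cidem O') (fhom (FF hu Cidem) (fhom (Pi (ctSuperCat (ctSuperCat C))) f)).
Proof.
rewrite /oalpha /= /Fh !fcomp !compA.
rewrite (AL (F_ir _ (osplit hu Cidem O))).
rewrite (AL (Pie_pinv hu O)) !compA (AL (ePi_i hu Cidem O)).
rewrite (AL (ePi_ir hu Cidem O')).
have -> : mv (fhom (Pi (ctSuperCat (ctSuperCat C))) f) = mv f by [].
rewrite (AL (mv_p u f)) !compA (AL (ePi_i hu Cidem O)).
by rewrite (AL (esym (mv_pinv f))) !compA.
Qed.

Lemma F_ri k (C D : LinCat k) (F : LinFunctor C D) (X : C) (e : hom C X X) (s : Split e) :
  comp D (fhom F (sr s)) (fhom F (si s)) = idm D _.
Proof. by rewrite -fcomp sri fid. Qed.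
Lemma F_ei k (C D : LinCat k) (F : LinFunctor C D) (X : C) (e : hom C X X) (s : Split e) :
  comp D (fhom F e) (fhom F (si s)) = fhom F (si s).
Proof. by rewrite -fcomp s_ei. Qed.

Lemma alpha_iso' k (C : SuperCat k) (u : k) (hu : 2 * u = 1) (Cidem : idempotent_complete C)
  (O : ctOb (ctSuperCat C)) : is_iso (oalpha hu Cidem O).
Proof.
case: (pinvP O) => H1 H2.
exists (comp C (sr (osplit hu Cidem (ctPiOb O)))
          (comp C (ophi O) (fhom (Pi C) (si (osplit hu Cidem O))))); split.
- rewrite /oalpha !compA (AL (F_ir _ _)) (AL (phi_Pie hu O)) !compA (AL H2) compm1.
  by rewrite (AL (ePi_i hu Cidem O)) sri.
- rewrite /oalpha !compA (AL (ePi_ir hu Cidem O)) -(compA _ (_ - _)) -(phi_Pie hu).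
  by rewrite !compA (AL H1) compm1 (AL (F_ei _ _)) F_ri.
Qed.

Lemma xi_pinv k (C : SuperCat k) (O : ctOb (ctSuperCat C)) :
  comp C (comp C (xi C (oX O)) (fhom (Pi C) (pinv O))) (pinv O) = idm C _.
Proof.
case: (pinvP O) => H1 H2.
by rewrite -phi_sq -(compA (ophi O)) -fcomp H2 fid compm1 H2.
Qed.

Lemma xi_pinvL k (C : SuperCat k) (O : ctOb (ctSuperCat C)) (W : C) (h : hom C (oX O) W) :
  comp C (comp C (comp C h (xi C (oX O))) (fhom (Pi C) (pinv O))) (pinv O) = h.
Proof. by rewrite -!compA (compA (xi _ _)) xi_pinv compm1. Qed.

Lemma eii k (C : SuperCat k) (u : k) (hu : 2 * u = 1) (Cidem : idempotent_complete C)
  (O : ctOb (ctSuperCat C)) :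
  comp C (oe u O) (si (osplit hu Cidem (ctPiOb (ctPiOb O)))) = si (osplit hu Cidem (ctPiOb (ctPiOb O))).
Proof. by rewrite -(e_PiPi u O) s_ei. Qed.

Lemma alpha_coh' k (C : SuperCat k) (u : k) (hu : 2 * u = 1) (Cidem : idempotent_complete C)
  (O : ctOb (ctSuperCat C)) :
  comp C (xi C (Fob hu Cidem O))
    (comp C (fhom (Pi C) (oalpha hu Cidem O)) (oalpha hu Cidem (ctPiOb O)))
  = fhom (FF hu Cidem) (xi (ctSuperCat (ctSuperCat C)) O).
Proof.
rewrite /oalpha /= /Fh !fcomp !compA.
rewrite (AL (F_ir _ (osplit hu Cidem (ctPiOb O)))) (e_Pi hu).
rewrite -[pinv (ctPiOb O)]/(pinv O) (AL (Pip_pinv hu O)) !compA.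
rewrite (AL (eii hu Cidem O)) -(xi_nat (sr (osplit hu Cidem O))).
rewrite xi_pinvL.
have -> : mv (ctxi O) = idm C _ by [].
by rewrite compm1.
Qed.



Record Bip k (C : LinCat k) (X Y : C) := {
  bS : C; b1 : hom C X bS; b2 : hom C Y bS; q1 : hom C bS X; q2 : hom C bS Y;
  bip : is_biproduct b1 b2 q1 q2 }.

Definition getBip k (C : LinCat k) (Cadd : additive_cat C) (X Y : C) : Bip X Y.
Proof.
have H : exists b : Bip X Y, True.
  case: (Cadd.2 X Y) => S [i1 [i2 [p1 [p2 H]]]].
  by exists (Build_Bip H).
exact: (proj1_sig (constructive_indefinite_description _ H)).
Defined.

Lemma q1b1 k (C : LinCat k) (X Y : C) (b : Bip X Y) : comp C (q1 b) (b1 b) = idm C X.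
Proof. by case: (bip b). Qed.
Lemma q2b2 k (C : LinCat k) (X Y : C) (b : Bip X Y) : comp C (q2 b) (b2 b) = idm C Y.
Proof. by case: (bip b). Qed.
Lemma q1b2 k (C : LinCat k) (X Y : C) (b : Bip X Y) : comp C (q1 b) (b2 b) = 0.
Proof. by case: (bip b). Qed.
Lemma q2b1 k (C : LinCat k) (X Y : C) (b : Bip X Y) : comp C (q2 b) (b1 b) = 0.
Proof. by case: (bip b). Qed.
Lemma bsum k (C : LinCat k) (X Y : C) (b : Bip X Y) :
  comp C (b1 b) (q1 b) + comp C (b2 b) (q2 b) = idm C _.
Proof. by case: (bip b). Qed.

Lemma ext_r k (C : LinCat k) (X Y S Z : C) (i1 : hom C X S) (i2 : hom C Y S)
  (p1 : hom C S X) (p2 : hom C S Y) (g h : hom C S Z) :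
  comp C i1 p1 + comp C i2 p2 = idm C S ->
  comp C g i1 = comp C h i1 -> comp C g i2 = comp C h i2 -> g = h.
Proof.
move=> E H1 H2.
by rewrite -[g]compm1 -[h]compm1 -E !compDr !compA H1 H2.
Qed.
Lemma ext_l k (C : LinCat k) (X Y S Z : C) (i1 : hom C X S) (i2 : hom C Y S)
  (p1 : hom C S X) (p2 : hom C S Y) (g h : hom C Z S) :
  comp C i1 p1 + comp C i2 p2 = idm C S ->
  comp C p1 g = comp C p1 h -> comp C p2 g = comp C p2 h -> g = h.
Proof.
move=> E H1 H2.
by rewrite -[g]comp1m -[h]comp1m -E !compDl -!compA H1 H2.
Qed.
Lemma sumF k (C D : LinCat k) (F : LinFunctor C D) (X Y S : C) (i1 : hom C X S) (i2 : hom C Y S)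
  (p1 : hom C S X) (p2 : hom C S Y) :
  comp C i1 p1 + comp C i2 p2 = idm C S ->
  comp D (fhom F i1) (fhom F p1) + comp D (fhom F i2) (fhom F p2) = idm D _.
Proof. by move=> E; rewrite -!fcomp -fhomD E fid. Qed.

Lemma F0 k (C D : LinCat k) (F : LinFunctor C D) (X Y Z : C) (a : hom C Y Z) (b : hom C X Y) :
  comp C a b = 0 -> comp D (fhom F a) (fhom F b) = 0.
Proof. by move=> E; rewrite -fcomp E fhom0. Qed.
Lemma F1 k (C D : LinCat k) (F : LinFunctor C D) (X Y : C) (a : hom C Y X) (b : hom C X Y) :
  comp C a b = idm C X -> comp D (fhom F a) (fhom F b) = idm D _.
Proof. by move=> E; rewrite -fcomp E fid. Qed.

Definition gB k (C : SuperCat k) (Cadd : additive_cat C) (Y : C) := getBip Cadd Y (Pi C Y).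

Definition gphi k (C : SuperCat k) (Cadd : additive_cat C) (Y : C) :
  hom C (Pi C (bS (gB Cadd Y))) (bS (gB Cadd Y)) :=
  comp C (b1 (gB Cadd Y)) (comp C (xi C Y) (fhom (Pi C) (q2 (gB Cadd Y))))
  + comp C (b2 (gB Cadd Y)) (fhom (Pi C) (q1 (gB Cadd Y))).

Lemma gphi_b1 k (C : SuperCat k) (Cadd : additive_cat C) (Y : C) :
  comp C (gphi Cadd Y) (fhom (Pi C) (b1 (gB Cadd Y))) = b2 (gB Cadd Y).
Proof.
by rewrite /gphi compDl -!compA (F0 _ (q2b1 _)) (F1 _ (q1b1 _)) !comp_0r compm1 add0r.
Qed.
Lemma gphi_b2 k (C : SuperCat k) (Cadd : additive_cat C) (Y : C) :
  comp C (gphi Cadd Y) (fhom (Pi C) (b2 (gB Cadd Y))) = comp C (b1 (gB Cadd Y)) (xi C Y).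
Proof.
by rewrite /gphi compDl -!compA (F0 _ (q1b2 _)) (F1 _ (q2b2 _)) !comp_0r compm1 addr0.
Qed.

Lemma gphi_sq k (C : SuperCat k) (Cadd : additive_cat C) (Y : C) :
  comp C (gphi Cadd Y) (fhom (Pi C) (gphi Cadd Y)) = xi C _.
Proof.
set b := gB Cadd Y.
apply: (ext_r (sumF (Pi C) (sumF (Pi C) (bsum b)))).
- rewrite -compA -fcomp gphi_b1 gphi_b2.
  by rewrite -xi_nat.
- rewrite -compA -fcomp gphi_b2 fcomp compA gphi_b1 -xi_nat xi_Pi.
  by [].
Qed.

Definition gOb1 k (C : SuperCat k) (Cadd : additive_cat C) (Y : C) : ctOb C :=
  CtOb (sq_iso (gphi_sq Cadd Y)) (gphi_sq Cadd Y).

Definition gpsi k (C : SuperCat k) (Cadd : additive_cat C) (Y : C) :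
  hom C (bS (gB Cadd Y)) (bS (gB Cadd Y)) :=
  comp C (b1 (gB Cadd Y)) (q1 (gB Cadd Y)) - comp C (b2 (gB Cadd Y)) (q2 (gB Cadd Y)).

Lemma gpsi_b1 k (C : SuperCat k) (Cadd : additive_cat C) (Y : C) :
  comp C (gpsi Cadd Y) (b1 (gB Cadd Y)) = b1 (gB Cadd Y).
Proof. by rewrite /gpsi compBl -!compA q1b1 q2b1 comp_0r compm1 subr0. Qed.
Lemma gpsi_b2 k (C : SuperCat k) (Cadd : additive_cat C) (Y : C) :
  comp C (gpsi Cadd Y) (b2 (gB Cadd Y)) = - b2 (gB Cadd Y).
Proof. by rewrite /gpsi compBl -!compA q1b2 q2b2 comp_0r compm1 sub0r. Qed.

Lemma gpsi_pred k (C : SuperCat k) (Cadd : additive_cat C) (Y : C) :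
  ct_pred (ctPiOb (gOb1 Cadd Y)) (gOb1 Cadd Y) (gpsi Cadd Y).
Proof.
apply: ct_in => /=; rewrite comp_Nr.
set b := gB Cadd Y.
apply: (ext_r (sumF (Pi C) (bsum b))).
- rewrite comp_Nl -!compA -fcomp gpsi_b1 gphi_b1 gpsi_b2.
  by rewrite opprK.
- rewrite comp_Nl -!compA -fcomp gpsi_b2 fhomN comp_Nr gphi_b2 compA gpsi_b1.
  by [].
Qed.

Lemma gpsi_sq k (C : SuperCat k) (Cadd : additive_cat C) (Y : C) :
  comp C (gpsi Cadd Y) (gpsi Cadd Y) = idm C _.
Proof.
apply: (ext_r (bsum (gB Cadd Y))).
- by rewrite -compA !gpsi_b1 comp1m.
- by rewrite -compA !gpsi_b2 comp_Nr gpsi_b2 opprK comp1m.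
Qed.

Definition gpsiH k (C : SuperCat k) (Cadd : additive_cat C) (Y : C) :
  hom (ctSuperCat C) (Pi (ctSuperCat C) (gOb1 Cadd Y)) (gOb1 Cadd Y) :=
  exist _ (gpsi Cadd Y) (gpsi_pred Cadd Y).

Lemma gpsi_iso k (C : SuperCat k) (Cadd : additive_cat C) (Y : C) : is_iso (gpsiH Cadd Y).
Proof.
exists (exist _ (gpsi Cadd Y)
   (inv_ct (gpsi_pred Cadd Y) (gpsi_sq Cadd Y) (gpsi_sq Cadd Y))).
by split; apply: val_inj; rewrite /= gpsi_sq.
Qed.

Lemma gpsi_sqH k (C : SuperCat k) (Cadd : additive_cat C) (Y : C) :
  comp (ctSuperCat C) (gpsiH Cadd Y) (fhom (Pi (ctSuperCat C)) (gpsiH Cadd Y))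
  = xi (ctSuperCat C) (gOb1 Cadd Y).
Proof. by apply: val_inj; rewrite /= gpsi_sq. Qed.

Definition gOb k (C : SuperCat k) (Cadd : additive_cat C) (Y : C) : ctOb (ctSuperCat C) :=
  CtOb (gpsi_iso Cadd Y) (gpsi_sqH Cadd Y).

Definition gH k (C : SuperCat k) (Cadd : additive_cat C) (Y Y' : C) (f : hom C Y Y') :
  hom C (bS (gB Cadd Y)) (bS (gB Cadd Y')) :=
  comp C (b1 (gB Cadd Y')) (comp C f (q1 (gB Cadd Y)))
  + comp C (b2 (gB Cadd Y')) (comp C (fhom (Pi C) f) (q2 (gB Cadd Y))).

Lemma gH_b1 k (C : SuperCat k) (Cadd : additive_cat C) (Y Y' : C) (f : hom C Y Y') :
  comp C (gH Cadd f) (b1 (gB Cadd Y)) = comp C (b1 (gB Cadd Y')) f.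
Proof. by rewrite /gH compDl -!compA q1b1 q2b1 !comp_0r compm1 addr0. Qed.
Lemma gH_b2 k (C : SuperCat k) (Cadd : additive_cat C) (Y Y' : C) (f : hom C Y Y') :
  comp C (gH Cadd f) (b2 (gB Cadd Y)) = comp C (b2 (gB Cadd Y')) (fhom (Pi C) f).
Proof. by rewrite /gH compDl -!compA q1b2 q2b2 !comp_0r compm1 add0r. Qed.
Lemma q1_gH k (C : SuperCat k) (Cadd : additive_cat C) (Y Y' : C) (f : hom C Y Y') :
  comp C (q1 (gB Cadd Y')) (gH Cadd f) = comp C f (q1 (gB Cadd Y)).
Proof. by rewrite /gH compDr !compA q1b1 q1b2 !comp_0l comp1m addr0. Qed.

Lemma gH_pred1 k (C : SuperCat k) (Cadd : additive_cat C) (Y Y' : C) (f : hom C Y Y') :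
  ct_pred (gOb1 Cadd Y) (gOb1 Cadd Y') (gH Cadd f).
Proof.
apply: ct_in => /=.
apply: (ext_r (sumF (Pi C) (bsum (gB Cadd Y)))).
- by rewrite -!compA -fcomp gphi_b1 gH_b1 gH_b2 fcomp compA gphi_b1.
- rewrite -!compA -fcomp gphi_b2 gH_b2 fcomp compA gH_b1 compA gphi_b2.
  by rewrite -!compA xi_nat.
Qed.

Lemma gH_pred2 k (C : SuperCat k) (Cadd : additive_cat C) (Y Y' : C) (f : hom C Y Y') :
  ct_pred (gOb Cadd Y) (gOb Cadd Y') (exist _ (gH Cadd f) (gH_pred1 Cadd f)).
Proof.
apply: ct_in; apply: val_inj => /=.
apply: (ext_r (bsum (gB Cadd Y))).
- by rewrite -!compA gpsi_b1 gH_b1 compA gpsi_b1.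
- by rewrite -!compA gpsi_b2 comp_Nr gH_b2 compA gpsi_b2 comp_Nl.
Qed.

Definition Gh k (C : SuperCat k) (Cadd : additive_cat C) (Y Y' : C) (f : hom C Y Y') :
  hom (ctSuperCat (ctSuperCat C)) (gOb Cadd Y) (gOb Cadd Y') :=
  exist _ (exist _ (gH Cadd f) (gH_pred1 Cadd f)) (gH_pred2 Cadd f).

Lemma Gh_comp k (C : SuperCat k) (Cadd : additive_cat C) (X Y Z : C)
  (g : hom C Y Z) (f : hom C X Y) :
  Gh Cadd (comp C g f) = comp (ctSuperCat (ctSuperCat C)) (Gh Cadd g) (Gh Cadd f).
Proof.
do 2 apply: val_inj => /=.
apply: (ext_r (bsum (gB Cadd X))).
- by rewrite (gH_b1 Cadd (comp C g f)) -compA (gH_b1 Cadd f) (compA (gH Cadd g)) (gH_b1 Cadd g) compA.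
- apply: etrans (gH_b2 Cadd (comp C g f)) _.
  by rewrite -compA (gH_b2 Cadd f) (compA (gH Cadd g)) (gH_b2 Cadd g) fcomp compA.
Qed.

Lemma Gh_id k (C : SuperCat k) (Cadd : additive_cat C) (X : C) :
  Gh Cadd (idm C X) = idm (ctSuperCat (ctSuperCat C)) (gOb Cadd X).
Proof.
do 2 apply: val_inj => /=.
apply: (ext_r (bsum (gB Cadd X))).
- by rewrite (gH_b1 Cadd (idm C X)) comp1m compm1.
- by rewrite (gH_b2 Cadd (idm C X)) fid comp1m compm1.
Qed.



Lemma e_g k (C : SuperCat k) (u : k) (hu : 2 * u = 1) (Cadd : additive_cat C) (Y : C) :
  oe u (gOb Cadd Y) = comp C (b1 (gB Cadd Y)) (q1 (gB Cadd Y)).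
Proof.
apply: (ext_r (bsum (gB Cadd Y))).
- rewrite /oe compZl compDl comp1m.
  have -> : comp C (opsi (gOb Cadd Y)) (b1 (gB Cadd Y)) = b1 (gB Cadd Y) by exact: gpsi_b1.
  by rewrite scalerDr (half2 hu) -compA q1b1 compm1.
- rewrite /oe compZl compDl comp1m.
  have -> : comp C (opsi (gOb Cadd Y)) (b2 (gB Cadd Y)) = - b2 (gB Cadd Y) by exact: gpsi_b2.
  by rewrite subrr scaler0 -compA q1b2 comp_0r.
Qed.

Definition geps k (C : SuperCat k) (u : k) (hu : 2 * u = 1) (Cidem : idempotent_complete C)
  (Cadd : additive_cat C) (Y : C) : hom C (Fob hu Cidem (gOb Cadd Y)) Y :=
  comp C (q1 (gB Cadd Y)) (si (osplit hu Cidem (gOb Cadd Y))).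

Lemma geps_iso k (C : SuperCat k) (u : k) (hu : 2 * u = 1) (Cidem : idempotent_complete C)
  (Cadd : additive_cat C) (Y : C) : is_iso (geps hu Cidem Cadd Y).
Proof.
exists (comp C (sr (osplit hu Cidem (gOb Cadd Y))) (b1 (gB Cadd Y))); split.
- rewrite /geps compA -(compA _ (b1 _)) -(e_g hu) s_re.
  exact: sri.
- rewrite /geps compA -(compA _ (si _)) sir (e_g hu) !compA q1b1 comp1m.
  exact: q1b1.
Qed.

Lemma geps_nat k (C : SuperCat k) (u : k) (hu : 2 * u = 1) (Cidem : idempotent_complete C)
  (Cadd : additive_cat C) (Y Y' : C) (f : hom C Y Y') :
  comp C f (geps hu Cidem Cadd Y) = comp C (geps hu Cidem Cadd Y') (fhom (FF hu Cidem) (Gh Cadd f)).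
Proof.
rewrite /geps /= /Fh !compA (AL (sir _)) (e_g hu Cadd Y') !compA q1b1 comp1m.
have -> : mv (Gh Cadd f) = gH Cadd f by [].
by rewrite q1_gH.
Qed.

Lemma psi_i k (C : SuperCat k) (u : k) (hu : 2 * u = 1) (Cidem : idempotent_complete C)
  (O : ctOb (ctSuperCat C)) :
  comp C (opsi O) (si (osplit hu Cidem O)) = si (osplit hu Cidem O).
Proof. by rewrite -{1}(s_ei (osplit hu Cidem O)) compA psi_e s_ei. Qed.

Lemma si_Fh k (C : SuperCat k) (u : k) (hu : 2 * u = 1) (Cidem : idempotent_complete C)
  (O O' : ctOb (ctSuperCat C)) (f : hom (ctSuperCat (ctSuperCat C)) O O') :
  comp C (si (osplit hu Cidem O')) (Fh hu Cidem f) = comp C (mv f) (si (osplit hu Cidem O)).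
Proof. by rewrite /Fh !compA sir -mv_e -compA s_ei. Qed.

Lemma r_p0 k (C : SuperCat k) (u : k) (hu : 2 * u = 1) (Cidem : idempotent_complete C)
  (O : ctOb (ctSuperCat C)) :
  comp C (sr (osplit hu Cidem O)) (idm C _ - oe u O) = 0.
Proof. by rewrite compBr compm1 s_re subrr. Qed.

Lemma p_i0 k (C : SuperCat k) (u : k) (hu : 2 * u = 1) (Cidem : idempotent_complete C)
  (O : ctOb (ctSuperCat C)) :
  comp C (idm C _ - oe u O) (si (osplit hu Cidem O)) = 0.
Proof. by rewrite compBl comp1m s_ei subrr. Qed.

Lemma rpi0 k (C : SuperCat k) (u : k) (hu : 2 * u = 1) (Cidem : idempotent_complete C)
  (O : ctOb (ctSuperCat C)) :
  comp C (fhom (Pi C) (sr (osplit hu Cidem O))) (comp C (pinv O) (si (osplit hu Cidem O))) = 0.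
Proof.
rewrite -(s_ei (osplit hu Cidem O)) (compA (pinv O)) -(Pip_pinv hu) !compA -fcomp (r_p0 hu).
by rewrite fhom0 !comp_0l.
Qed.

Lemma rphi0 k (C : SuperCat k) (u : k) (hu : 2 * u = 1) (Cidem : idempotent_complete C)
  (O : ctOb (ctSuperCat C)) :
  comp C (sr (osplit hu Cidem O)) (comp C (ophi O) (fhom (Pi C) (si (osplit hu Cidem O)))) = 0.
Proof.
rewrite -(F_ei (Pi C) (osplit hu Cidem O)) (compA (ophi O)) (phi_Pie hu) !compA (r_p0 hu).
by rewrite !comp_0l.
Qed.

Definition etav k (C : SuperCat k) (u : k) (hu : 2 * u = 1) (Cidem : idempotent_complete C)
  (Cadd : additive_cat C) (O : ctOb (ctSuperCat C)) :
  hom C (bS (gB Cadd (Fob hu Cidem O))) (oX O) :=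
  comp C (si (osplit hu Cidem O)) (q1 (gB Cadd (Fob hu Cidem O)))
  + comp C (ophi O) (comp C (fhom (Pi C) (si (osplit hu Cidem O))) (q2 (gB Cadd (Fob hu Cidem O)))).

Lemma etav_b1 k (C : SuperCat k) (u : k) (hu : 2 * u = 1) (Cidem : idempotent_complete C)
  (Cadd : additive_cat C) (O : ctOb (ctSuperCat C)) :
  comp C (etav hu Cidem Cadd O) (b1 (gB Cadd (Fob hu Cidem O))) = si (osplit hu Cidem O).
Proof. by rewrite /etav compDl -!compA q1b1 q2b1 !comp_0r compm1 addr0. Qed.
Lemma etav_b2 k (C : SuperCat k) (u : k) (hu : 2 * u = 1) (Cidem : idempotent_complete C)
  (Cadd : additive_cat C) (O : ctOb (ctSuperCat C)) :
  comp C (etav hu Cidem Cadd O) (b2 (gB Cadd (Fob hu Cidem O)))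
  = comp C (ophi O) (fhom (Pi C) (si (osplit hu Cidem O))).
Proof. by rewrite /etav compDl -!compA q1b2 q2b2 !comp_0r compm1 add0r. Qed.

Lemma etav_pred1 k (C : SuperCat k) (u : k) (hu : 2 * u = 1) (Cidem : idempotent_complete C)
  (Cadd : additive_cat C) (O : ctOb (ctSuperCat C)) :
  ct_pred (gOb1 Cadd (Fob hu Cidem O)) (ctX O) (etav hu Cidem Cadd O).
Proof.
apply: ct_in => /=.
apply: (ext_r (sumF (Pi C) (bsum (gB Cadd (Fob hu Cidem O))))).
- rewrite -!compA gphi_b1 etav_b2 -fcomp.
  by rewrite (etav_b1 hu).
- rewrite -!compA gphi_b2 compA (etav_b1 hu) -fcomp (etav_b2 hu) fcomp compA.
  have -> : ctphi (ctX O) = ophi O by [].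
  by rewrite phi_sq xi_nat.
Qed.

Definition etaH1 k (C : SuperCat k) (u : k) (hu : 2 * u = 1) (Cidem : idempotent_complete C)
  (Cadd : additive_cat C) (O : ctOb (ctSuperCat C)) :
  hom (ctSuperCat C) (ctX (gOb Cadd (Fob hu Cidem O))) (ctX O) :=
  exist _ (etav hu Cidem Cadd O) (etav_pred1 hu Cidem Cadd O).

Lemma etav_pred2 k (C : SuperCat k) (u : k) (hu : 2 * u = 1) (Cidem : idempotent_complete C)
  (Cadd : additive_cat C) (O : ctOb (ctSuperCat C)) :
  ct_pred (gOb Cadd (Fob hu Cidem O)) O (etaH1 hu Cidem Cadd O).
Proof.
apply: ct_in; apply: val_inj => /=.
apply: (ext_r (bsum (gB Cadd (Fob hu Cidem O)))).
- rewrite -!compA gpsi_b1 (etav_b1 hu).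
  by rewrite -[sval (ctphi O)]/(opsi O) (psi_i hu).
- rewrite -[sval (ctphi O)]/(opsi O) -!compA gpsi_b2 comp_Nr (etav_b2 hu).
  by rewrite compA psi_phi comp_Nl -compA -fcomp (psi_i hu).
Qed.

Definition etaH k (C : SuperCat k) (u : k) (hu : 2 * u = 1) (Cidem : idempotent_complete C)
  (Cadd : additive_cat C) (O : ctOb (ctSuperCat C)) :
  hom (ctSuperCat (ctSuperCat C)) (gOb Cadd (Fob hu Cidem O)) O :=
  exist _ (etaH1 hu Cidem Cadd O) (etav_pred2 hu Cidem Cadd O).

Definition etai k (C : SuperCat k) (u : k) (hu : 2 * u = 1) (Cidem : idempotent_complete C)
  (Cadd : additive_cat C) (O : ctOb (ctSuperCat C)) :
  hom C (oX O) (bS (gB Cadd (Fob hu Cidem O))) :=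
  comp C (b1 (gB Cadd (Fob hu Cidem O))) (sr (osplit hu Cidem O))
  + comp C (b2 (gB Cadd (Fob hu Cidem O))) (comp C (fhom (Pi C) (sr (osplit hu Cidem O))) (pinv O)).

Lemma etai_r k (C : SuperCat k) (u : k) (hu : 2 * u = 1) (Cidem : idempotent_complete C)
  (Cadd : additive_cat C) (O : ctOb (ctSuperCat C)) :
  comp C (etav hu Cidem Cadd O) (etai hu Cidem Cadd O) = idm C _.
Proof.
case: (pinvP O) => H1 H2.
rewrite /etai compDr !compA (etav_b1 hu) (etav_b2 hu) sir.
rewrite (AL (F_ir _ _)) (phi_Pie hu) -compA H2 compm1.
by rewrite addrC subrK.
Qed.

Lemma etai_l k (C : SuperCat k) (u : k) (hu : 2 * u = 1) (Cidem : idempotent_complete C)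
  (Cadd : additive_cat C) (O : ctOb (ctSuperCat C)) :
  comp C (etai hu Cidem Cadd O) (etav hu Cidem Cadd O) = idm C _.
Proof.
case: (pinvP O) => H1 H2.
apply: (ext_r (bsum (gB Cadd (Fob hu Cidem O)))).
- rewrite -compA (etav_b1 hu) /etai compDl -!compA sri compm1 (rpi0 hu) comp_0r addr0.
  by rewrite comp1m.
- rewrite -compA (etav_b2 hu) /etai compDl -!compA (rphi0 hu) comp_0r add0r.
  by rewrite (compA (pinv O)) H1 comp1m (F_ri (Pi C)) compm1 comp1m.
Qed.

Lemma etaH_iso k (C : SuperCat k) (u : k) (hu : 2 * u = 1) (Cidem : idempotent_complete C)
  (Cadd : additive_cat C) (O : ctOb (ctSuperCat C)) : is_iso (etaH hu Cidem Cadd O).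
Proof.
have P1 := inv_ct (etav_pred1 hu Cidem Cadd O) (etai_l hu Cidem Cadd O) (etai_r hu Cidem Cadd O).
pose ei1 : hom (ctSuperCat C) (ctX O) (ctX (gOb Cadd (Fob hu Cidem O))) := @exist _ (ct_pred (ctX O) (gOb1 Cadd (Fob hu Cidem O))) (etai hu Cidem Cadd O) P1.
have E1 : comp (ctSuperCat C) ei1 (etaH1 hu Cidem Cadd O)
   = idm (ctSuperCat C) _ by apply: val_inj; rewrite /= etai_l.
have E2 : comp (ctSuperCat C) (etaH1 hu Cidem Cadd O) ei1
   = idm (ctSuperCat C) _ by apply: val_inj; rewrite /= etai_r.
have P2 := @inv_ct k (ctSuperCat C) (gOb Cadd (Fob hu Cidem O)) O _ ei1 (etav_pred2 hu Cidem Cadd O) E1 E2.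
exists (exist _ ei1 P2); split; do 2 apply: val_inj => /=.
- exact: etai_l.
- exact: etai_r.
Qed.

Lemma etaH_nat k (C : SuperCat k) (u : k) (hu : 2 * u = 1) (Cidem : idempotent_complete C)
  (Cadd : additive_cat C) (O O' : ctOb (ctSuperCat C)) (f : hom (ctSuperCat (ctSuperCat C)) O O') :
  comp (ctSuperCat (ctSuperCat C)) f (etaH hu Cidem Cadd O)
  = comp (ctSuperCat (ctSuperCat C)) (etaH hu Cidem Cadd O') (Gh Cadd (fhom (FF hu Cidem) f)).
Proof.
do 2 apply: val_inj => /=.
apply: (ext_r (bsum (gB Cadd (Fob hu Cidem O)))).
- rewrite -!compA (etav_b1 hu).
  apply: esym; apply: etrans (congr1 _ (gH_b1 Cadd (Fh hu Cidem f))) _.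
  by rewrite compA (etav_b1 hu) si_Fh.
- rewrite -!compA (etav_b2 hu).
  apply: esym; apply: etrans (congr1 _ (gH_b2 Cadd (Fh hu Cidem f))) _.
  rewrite compA (etav_b2 hu) -compA -fcomp si_Fh fcomp compA.
  by rewrite -mv_phi compA.
Qed.



Definition SF k (C : SuperCat k) (u : k) (hu : 2 * u = 1) (Cidem : idempotent_complete C) :
  SuperFunctor (ctSuperCat (ctSuperCat C)) C :=
  {| sfun := FF hu Cidem; alpha := oalpha hu Cidem;
     alpha_nat := alpha_nat' hu Cidem; alpha_iso := alpha_iso' hu Cidem;
     alpha_coh := alpha_coh' hu Cidem |}.

Theorem mainTheorem11 (k : comPzRingType) (two_inv : exists u : k, 2 * u = 1)
    (C : SuperCat k) (C_additive : additive_cat C)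
    (C_idem : idempotent_complete C) :
  exists F : SuperFunctor (ctSuperCat (ctSuperCat C)) C, is_super_equivalence F.
Proof.
case: two_inv => u hu.
exists (SF hu C_idem).
exists (gOb C_additive), (fun X Y f => @Gh k C C_additive X Y f).
split; first by move=> *; apply: Gh_comp.
split; first by move=> *; apply: Gh_id.
split.
- exists (etaH hu C_idem C_additive); split.
  + by move=> X Y f; apply: etaH_nat.
  + by move=> X; apply: etaH_iso.
- exists (geps hu C_idem C_additive); split.
  + by move=> X Y f; apply: geps_nat.
  + by move=> X; apply: geps_iso.
Qed.
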